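(* Let $a<b$, $\gamma>0$, $\mu=e^{-\gamma(b-a)}$, let $k\ge 1$ be an integer, and let $C_a,C_b\in\mathbb{R}$ be given. With the operators $I^L, I^R, I^0, \mathcal{D}_L, \mathcal{D}_R, \mathcal{D}_0$ defined in the context (with boundary data $C_a$, $C_b$): (i) If $v\in\mathcal{C}^{k+1}[a,b]$, then for all $x\in[a,b]$, \[ \mathcal{D}_{L}[v,\gamma](x) = -\sum_{p=1}^{k}\left(-\frac{1}{\gamma}\right)^{p}\left(\partial_x^{p}v(x)-\partial_x^{p}v(a)e^{-\gamma(x-a)}\right) - \left(-\frac{1}{\gamma}\right)^{k+1} I^{L}[\partial_x^{k+1}v,\gamma](x) + C_a e^{-\gamma(x-a)}, \] \[ \mathcal{D}_{R}[v,\gamma](x) = -\sum_{p=1}^{k}\left(\frac{1}{\gamma}\right)^{p}\left(\partial_x^{p}v(x)-\partial_x^{p}v(b)e^{-\gamma(b-x)}\right) - \left(\frac{1}{\gamma}\right)^{k+1} I^{R}[\partial_x^{k+1}v,\gamma](x) + C_b e^{-\gamma(b-x)}. \] (ii) If $v\in\mathcal{C}^{2k+2}[a,b]$, then for all $x\in[a,b]$, \begin{align*} \mathcal{D}_{0}[v,\gamma](x) =& -\sum_{p=1}^{k}\left(\frac{1}{\gamma}\right)^{2p}\left(\partial_x^{2p}v(x) + \frac{\mu\,\partial_x^{2p}v(b)-\partial_x^{2p}v(a)}{1-\mu^2}e^{-\gamma(x-a)} + \frac{\mu\,\partial_x^{2p}v(a)-\partial_x^{2p}v(b)}{1-\mu^2}e^{-\gamma(b-x)}\right)\\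 & - \frac{\mu C_b - C_a}{1-\mu^2}e^{-\gamma(x-a)} - \frac{\mu C_a - C_b}{1-\mu^2}e^{-\gamma(b-x)}\\ & - \left(\frac{1}{\gamma}\right)^{2k+2}\Big( I^0[\partial_x^{2k+2}v,\gamma](x) + \frac{\mu I^0[\partial_x^{2k+2}v,\gamma](b) - I^0[\partial_x^{2k+2}v,\gamma](a)}{1-\mu^2}e^{-\gamma(x-a)}\\ &\qquad\qquad + \frac{\mu I^0[\partial_x^{2k+2}v,\gamma](a) - I^0[\partial_x^{2k+2}v,\gamma](b)}{1-\mu^2}e^{-\gamma(b-x)}\Big). \end{align*}
   Context: Fix $a<b$, $\gamma>0$ and $\mu=e^{-\gamma(b-a)}$. For a continuous function $v$ on $[a,b]$ define $I^{L}[v,\gamma](x)=\gamma\int_a^x e^{-\gamma(x-y)}v(y)\,dy$, $I^{R}[v,\gamma](x)=\gamma\int_x^b e^{-\gamma(y-x)}v(y)\,dy$, $I^{0}[v,\gamma](x)=\frac{\gamma}{2}\int_a^b e^{-\gamma|x-y|}v(y)\,dy$. Given real numbers $C_a, C_b$, define $\mathcal{D}_L[v,\gamma](x)=v(x)-I^L[v,\gamma](x)-A_L e^{-\gamma(x-a)}$ with $A_L=v(a)-C_a$ (so that $\mathcal{D}_L[v,\gamma](a)=C_a$); $\mathcal{D}_R[v,\gamma](x)=v(x)-I^R[v,\gamma](x)-B_R e^{-\gamma(b-x)}$ with $B_R=v(b)-C_b$ (so that $\mathcal{D}_R[v,\gamma](b)=C_b$); $\mathcal{D}_0[v,\gamma](x)=v(x)-I^0[v,\gamma](x)-A_0e^{-\gamma(x-a)}-B_0e^{-\gamma(b-x)}$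 with $A_0=\frac{1}{1-\mu^2}\big(\mu(I^0[v,\gamma](b)-v(b)+C_b)-(I^0[v,\gamma](a)-v(a)+C_a)\big)$, $B_0=\frac{1}{1-\mu^2}\big(\mu(I^0[v,\gamma](a)-v(a)+C_a)-(I^0[v,\gamma](b)-v(b)+C_b)\big)$ (so that $\mathcal{D}_0[v,\gamma](a)=C_a$ and $\mathcal{D}_0[v,\gamma](b)=C_b$). Here $\partial_x^p v(a)$, $\partial_x^p v(b)$ denote one-sided derivatives at the endpoints. *)

(* Defs.v *)
From Stdlib Require Import Reals.
From Coquelicot Require Import Coquelicot.
Open Scope R_scope.

Definition deriv_on (a b : R) (f f' : R -> R) : Prop :=
  forall x, a <= x <= b ->
  forall eps, 0 < eps -> exists delta, 0 < delta /\
    forall y, a <= y <= b -> Rabs (y - x) < delta ->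
      Rabs (f y - f x - f' x * (y - x)) <= eps * Rabs (y - x).

Definition cont_on (a b : R) (f : R -> R) : Prop :=
  forall x, a <= x <= b ->
  forall eps, 0 < eps -> exists delta, 0 < delta /\
    forall y, a <= y <= b -> Rabs (y - x) < delta -> Rabs (f y - f x) < eps.

Definition Cn_on (a b : R) (n : nat) (v : R -> R) (D : nat -> R -> R) : Prop :=
  (forall x, a <= x <= b -> D 0%nat x = v x) /\
  (forall p, (p < n)%nat -> deriv_on a b (D p) (D (S p))) /\
  cont_on a b (D n).

Definition IntL (a : R) (v : R -> R) (g x : R) : R :=
  g * RInt (fun y => exp (- g * (x - y)) * v y) a x.
Definition IntR (b : R) (v : R -> R) (g x : R) : R :=
  g * RInt (fun y => exp (- g * (y - x)) * v y) x b.
Definition Int0 (a b : R) (v : R -> R) (g x : R) : R :=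
  g / 2 * RInt (fun y => exp (- g * Rabs (x - y)) * v y) a b.

Definition mu (a b g : R) : R := exp (- g * (b - a)).

Definition DiffL (a Ca : R) (v : R -> R) (g x : R) : R :=
  v x - IntL a v g x - (v a - Ca) * exp (- g * (x - a)).
Definition DiffR (b Cb : R) (v : R -> R) (g x : R) : R :=
  v x - IntR b v g x - (v b - Cb) * exp (- g * (b - x)).

Definition Coef_A0 (a b Ca Cb : R) (v : R -> R) (g : R) : R :=
  / (1 - mu a b g ^ 2) *
  (mu a b g * (Int0 a b v g b - v b + Cb) - (Int0 a b v g a - v a + Ca)).
Definition Coef_B0 (a b Ca Cb : R) (v : R -> R) (g : R) : R :=
  / (1 - mu a b g ^ 2) *
  (mu a b g * (Int0 a b v g a - v a + Ca) - (Int0 a b v g b - v b + Cb)).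

Definition Diff0 (a b Ca Cb : R) (v : R -> R) (g x : R) : R :=
  v x - Int0 a b v g x - Coef_A0 a b Ca Cb v g * exp (- g * (x - a))
      - Coef_B0 a b Ca Cb v g * exp (- g * (b - x)).

(* Main.v *)
Require Import Defs.
From Stdlib Require Import Reals Lra Lia.
From Coquelicot Require Import Coquelicot.
Open Scope R_scope.

Definition clamp (a b y : R) := Rmax a (Rmin b y).

Lemma clamp_in a b y : a <= b -> a <= clamp a b y <= b.
Proof. intros. unfold clamp, Rmax, Rmin; repeat destruct Rle_dec; lra. Qed.
Lemma clamp_id a b y : a <= y <= b -> clamp a b y = y.
Proof. intros. unfold clamp, Rmax, Rmin; repeat destruct Rle_dec; lra. Qed.
Lemma clamp_lip a b y z : a <= b -> Rabs (clamp a b z - clamp a b y) <= Rabs (z - y).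
Proof. intros. unfold clamp, Rmax, Rmin, Rabs; repeat destruct Rle_dec; repeat destruct Rcase_abs; lra. Qed.
Lemma clamp_lip2 a b y z : a <= y <= b -> Rabs (clamp a b z - y) <= Rabs (z - y).
Proof. intros. unfold clamp, Rmax, Rmin, Rabs; repeat destruct Rle_dec; repeat destruct Rcase_abs; lra. Qed.
Lemma clamp_dist a b y z : a <= y <= b -> Rabs (z - clamp a b z) <= Rabs (z - y).
Proof. intros. unfold clamp, Rmax, Rmin, Rabs; repeat destruct Rle_dec; repeat destruct Rcase_abs; lra. Qed.

Lemma cont_clamp a b f y : a <= b -> cont_on a b f -> continuous (fun z => f (clamp a b z)) y.
Proof.
  intros Hab Hf. apply continuity_pt_filterlim.
  intros eps Heps. destruct (Hf (clamp a b y) (clamp_in a b y Hab) eps Heps) as [d [Hd H]].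
  exists d; split; auto. intros z [_ Hz]. unfold R_dist in *. simpl in *. unfold R_dist in *.
  apply H. apply clamp_in; auto. eapply Rle_lt_trans. apply clamp_lip; auto. auto.
Qed.

Definition ext a b (F F' : R -> R) z := F (clamp a b z) + F' (clamp a b z) * (z - clamp a b z).

Lemma ext_derive a b F F' y : a <= b -> deriv_on a b F F' -> cont_on a b F' -> a <= y <= b ->
  is_derive (ext a b F F') y (F' y).
Proof.
  intros Hab HF HF' Hy. apply is_derive_Reals. intros eps Heps.
  destruct (HF y Hy (eps/4)) as [d1 [Hd1 H1]]; [lra|].
  destruct (HF' y Hy (eps/4)) as [d2 [Hd2 H2]]; [lra|].
  assert (Hd : 0 < Rmin d1 d2) by (apply Rmin_pos; auto).
  exists (mkposreal _ Hd). intros h Hh Hhd. simpl in Hhd.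
  set (c := clamp a b (y + h)).
  assert (Hc : a <= c <= b) by (apply clamp_in; auto).
  assert (Hcy : Rabs (c - y) <= Rabs h).
  { pose proof (clamp_lip2 a b y (y+h) Hy) as HH. replace (y+h-y) with h in HH by ring. exact HH. }
  assert (Hzc : Rabs (y + h - c) <= Rabs h).
  { pose proof (clamp_dist a b y (y+h) Hy) as HH. replace (y+h-y) with h in HH by ring. exact HH. }
  assert (Hmin1 : Rabs h < d1) by (eapply Rlt_le_trans; [exact Hhd| apply Rmin_l]).
  assert (Hmin2 : Rabs h < d2) by (eapply Rlt_le_trans; [exact Hhd| apply Rmin_r]).
  assert (E1 := H1 c Hc ltac:(lra)).
  assert (E2 : Rabs (F' c - F' y) <= eps/4) by (left; apply H2; auto; lra).
  assert (Hext : ext a b F F' y = F y) by (unfold ext; rewrite clamp_id; auto; ring).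
  assert (Hexz : ext a b F F' (y + h) - F y - F' y * h =
     (F c - F y - F' y * (c - y)) + (F' c - F' y) * (y + h - c)) by (unfold ext; fold c; ring).
  assert (Hb : Rabs (ext a b F F' (y + h) - F y - F' y * h) <= eps/2 * Rabs h).
  { rewrite Hexz. eapply Rle_trans. apply Rabs_triang. rewrite Rabs_mult.
    assert (0 <= Rabs (y + h - c)) by apply Rabs_pos.
    assert (Rabs (F' c - F' y) * Rabs (y + h - c) <= eps/4 * Rabs h).
    { apply Rmult_le_compat; auto; apply Rabs_pos. }
    nra. }
  rewrite Hext.
  assert (Hpos : 0 < Rabs h) by (apply Rabs_pos_lt; auto).
  replace ((ext a b F F' (y + h) - F y) / h - F' y) with ((ext a b F F' (y + h) - F y - F' y * h) / h)
    by (field; auto).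
  unfold Rdiv. rewrite Rabs_mult, Rabs_inv.
  apply Rle_lt_trans with (eps/2 * Rabs h * / Rabs h).
  apply Rmult_le_compat_r; auto. left; apply Rinv_0_lt_compat; auto.
  field_simplify; lra.
Qed.

Lemma deriv_cont a b F F' : deriv_on a b F F' -> cont_on a b F.
Proof.
  intros HF x Hx eps Heps.
  destruct (HF x Hx 1 Rlt_0_1) as [d [Hd H]].
  set (K := Rabs (F' x) + 1).
  assert (HK : 0 < K) by (unfold K; pose proof (Rabs_pos (F' x)); lra).
  exists (Rmin d (eps / K)). split. apply Rmin_pos; auto. apply Rdiv_lt_0_compat; auto.
  intros y Hy Hyx.
  assert (Hyd : Rabs (y - x) < d) by (eapply Rlt_le_trans; [exact Hyx| apply Rmin_l]).
  assert (Hye : Rabs (y - x) < eps / K) by (eapply Rlt_le_trans; [exact Hyx| apply Rmin_r]).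
  specialize (H y Hy Hyd).
  assert (Rabs (F y - F x) <= K * Rabs (y - x)).
  { replace (F y - F x) with ((F y - F x - F' x * (y - x)) + F' x * (y - x)) by ring.
    eapply Rle_trans. apply Rabs_triang. rewrite Rabs_mult. unfold K. lra. }
  apply Rle_lt_trans with (K * Rabs (y - x)); auto.
  apply Rmult_lt_compat_l with (r := K) in Hye; auto.
  replace (K * (eps / K)) with eps in Hye by (field; lra). auto.
Qed.

Lemma exRInt_w a b f (w : R -> R) c d : a <= b -> cont_on a b f -> (forall y, continuous w y) ->
  a <= c -> c <= d -> d <= b -> ex_RInt (fun y => w y * f y) c d.
Proof.
  intros Hab Hf Hw Hc Hcd Hd.
  apply ex_RInt_ext with (fun y => w y * f (clamp a b y)).
  { intros y Hy. rewrite Rmin_left, Rmax_right in Hy by lra. rewrite clamp_id; auto; lra. }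
  apply (ex_RInt_continuous (V:=R_CompleteNormedModule)). intros z _.
  apply (continuous_mult w (fun y => f (clamp a b y))); auto. apply cont_clamp; auto.
Qed.

Lemma exd_cont (f : R -> R) y : ex_derive f y -> continuous f y.
Proof. apply (ex_derive_continuous (K:=R_AbsRing) (V:=R_NormedModule)). Qed.

Lemma cont_e1 g t (y:R) : continuous (fun y => exp (- g * (t - y))) y.
Proof. apply exd_cont. auto_derive. auto. Qed.
Lemma cont_e2 g t (y:R) : continuous (fun y => exp (- g * (y - t))) y.
Proof. apply exd_cont. auto_derive. auto. Qed.

Lemma IBP_L a b g F F' t : a <= b -> deriv_on a b F F' -> cont_on a b F' -> a <= t <= b -> 0 < g ->
  IntL a F g t = F t - F a * exp (- g * (t - a)) - / g * IntL a F' g t.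
Proof.
  intros Hab HF HF' Ht Hg.
  assert (HFc : cont_on a b F) by (eapply deriv_cont; eauto).
  set (e := fun y => exp (- g * (t - y))).
  assert (De : forall y, is_derive e y (g * e y)).
  { intros y. unfold e. auto_derive. auto. unfold Rminus; ring. }
  assert (HR : is_RInt (fun y => g * e y * ext a b F F' y + e y * F' (clamp a b y)) a t
                 (minus (e t * ext a b F F' t) (e a * ext a b F F' a))).
  { apply (is_RInt_derive (fun y => e y * ext a b F F' y)).
    - intros y Hy. rewrite Rmin_left, Rmax_right in Hy by lra.
      rewrite (clamp_id a b y) by lra.
      apply (is_derive_mult e (ext a b F F')). apply De. apply ext_derive; auto; lra.
      intros; apply Rmult_comm.
    - intros y Hy. rewrite Rmin_left, Rmax_right in Hy by lra.
      apply (continuous_plus (fun y => g * e y * ext a b F F' y) (fun y => e y * F' (clamp a b y))).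
      + apply (continuous_mult (fun y => g * e y) (ext a b F F')).
        apply (continuous_mult (fun _ => g) e). apply continuous_const. apply exd_cont. eexists; apply De.
        apply exd_cont. eexists; apply ext_derive; auto; lra.
      + apply (continuous_mult e (fun y => F' (clamp a b y))).
        apply exd_cont. eexists; apply De.
        apply cont_clamp; auto. }
  assert (E1 := exRInt_w a b F e a t Hab HFc (cont_e1 g t) (Rle_refl a) (proj1 Ht) (proj2 Ht)).
  assert (E2 := exRInt_w a b F' e a t Hab HF' (cont_e1 g t) (Rle_refl a) (proj1 Ht) (proj2 Ht)).
  assert (HR2 := is_RInt_plus _ _ _ _ _ _ (is_RInt_scal _ _ _ g _ (RInt_correct _ _ _ E1)) (RInt_correct _ _ _ E2)).
  assert (HR' : is_RInt (fun y => plus (scal g (e y * F y)) (e y * F' y)) a t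
                 (minus (e t * ext a b F F' t) (e a * ext a b F F' a))).
  { eapply is_RInt_ext; [|exact HR]. intros y Hy. rewrite Rmin_left, Rmax_right in Hy by lra.
    unfold ext. rewrite clamp_id by lra. unfold plus, scal; simpl; unfold mult; simpl. ring. }
  apply (is_RInt_unique (V:=R_CompleteNormedModule)) in HR'. apply (is_RInt_unique (V:=R_CompleteNormedModule)) in HR2. pose proof (eq_trans (eq_sym HR2) HR') as HR3. clear HR2 HR HR'. rename HR3 into HR2.
  unfold ext in HR2. rewrite !clamp_id in HR2 by lra.
  unfold plus, scal, minus, opp in HR2; simpl in HR2; unfold mult, plus, opp in HR2; simpl in HR2.
  unfold e in HR2. unfold IntL.
  set (I1 := RInt (fun y => exp (- g * (t - y)) * F y) a t) in *.
  set (I2 := RInt (fun y => exp (- g * (t - y)) * F' y) a t) in *.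
  replace (t - t) with 0 in HR2 by ring. rewrite Rmult_0_r, exp_0 in HR2.
  assert (/g*(g*I2) = I2) by (field; lra). rewrite H.
  replace (a - a) with 0 in HR2 by ring. lra.
Qed.

Lemma IBP_R a b g F F' t : a <= b -> deriv_on a b F F' -> cont_on a b F' -> a <= t <= b -> 0 < g ->
  IntR b F g t = F t - F b * exp (- g * (b - t)) + / g * IntR b F' g t.
Proof.
  intros Hab HF HF' Ht Hg.
  assert (HFc : cont_on a b F) by (eapply deriv_cont; eauto).
  set (e := fun y => exp (- g * (y - t))).
  assert (De : forall y, is_derive e y (- g * e y)).
  { intros y. unfold e. auto_derive. auto. unfold Rminus; ring. }
  assert (HR : is_RInt (fun y => - g * e y * ext a b F F' y + e y * F' (clamp a b y)) t b
                 (minus (e b * ext a b F F' b) (e t * ext a b F F' t))).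
  { apply (is_RInt_derive (fun y => e y * ext a b F F' y)).
    - intros y Hy. rewrite Rmin_left, Rmax_right in Hy by lra.
      rewrite (clamp_id a b y) by lra.
      apply (is_derive_mult e (ext a b F F')). apply De. apply ext_derive; auto; lra.
      intros; apply Rmult_comm.
    - intros y Hy. rewrite Rmin_left, Rmax_right in Hy by lra.
      apply (continuous_plus (fun y => - g * e y * ext a b F F' y) (fun y => e y * F' (clamp a b y))).
      + apply (continuous_mult (fun y => - g * e y) (ext a b F F')).
        apply (continuous_mult (fun _ => - g) e). apply continuous_const. apply exd_cont. eexists; apply De.
        apply exd_cont. eexists; apply ext_derive; auto; lra.
      + apply (continuous_mult e (fun y => F' (clamp a b y))).
        apply exd_cont. eexists; apply De.
        apply cont_clamp; auto. }
  assert (E1 := exRInt_w a b F e t b Hab HFc (cont_e2 g t) (proj1 Ht) (proj2 Ht) (Rle_refl b)).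
  assert (E2 := exRInt_w a b F' e t b Hab HF' (cont_e2 g t) (proj1 Ht) (proj2 Ht) (Rle_refl b)).
  assert (HR2 := is_RInt_plus _ _ _ _ _ _ (is_RInt_scal _ _ _ (- g) _ (RInt_correct _ _ _ E1)) (RInt_correct _ _ _ E2)).
  assert (HR' : is_RInt (fun y => plus (scal (- g) (e y * F y)) (e y * F' y)) t b
                 (minus (e b * ext a b F F' b) (e t * ext a b F F' t))).
  { eapply is_RInt_ext; [|exact HR]. intros y Hy. rewrite Rmin_left, Rmax_right in Hy by lra.
    unfold ext. rewrite clamp_id by lra. unfold plus, scal; simpl; unfold mult; simpl. ring. }
  apply (is_RInt_unique (V:=R_CompleteNormedModule)) in HR'. apply (is_RInt_unique (V:=R_CompleteNormedModule)) in HR2.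
  pose proof (eq_trans (eq_sym HR2) HR') as HR3. clear HR2 HR HR'. rename HR3 into HR2.
  unfold ext in HR2. rewrite !clamp_id in HR2 by lra.
  unfold plus, scal, minus, opp in HR2; simpl in HR2; unfold mult, plus, opp in HR2; simpl in HR2.
  unfold e in HR2. unfold IntR.
  set (I1 := RInt (fun y => exp (- g * (y - t)) * F y) t b) in *.
  set (I2 := RInt (fun y => exp (- g * (y - t)) * F' y) t b) in *.
  replace (t - t) with 0 in HR2 by ring. rewrite Rmult_0_r, exp_0 in HR2.
  assert (/g*(g*I2) = I2) by (field; lra). rewrite H.
  replace (b - b) with 0 in HR2 by ring. lra.
Qed.

Lemma Int0_split a b g F t : a <= b -> cont_on a b F -> a <= t <= b ->
  Int0 a b F g t = (IntL a F g t + IntR b F g t) / 2.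
Proof.
  intros Hab HF Ht. unfold Int0, IntL, IntR.
  assert (Hw : forall y, continuous (fun y => exp (- g * Rabs (t - y))) y).
  { intros y. apply continuous_exp_comp.
    apply (continuous_mult (fun _ => - g) (fun y => Rabs (t - y))). apply continuous_const.
    apply continuous_Rabs_comp. apply exd_cont. auto_derive. auto. }
  rewrite <- (RInt_Chasles (V:=R_CompleteNormedModule) _ a t b).
  2: apply (exRInt_w a b F _ a t Hab HF Hw); lra.
  2: apply (exRInt_w a b F _ t b Hab HF Hw); lra.
  rewrite (RInt_ext (V:=R_CompleteNormedModule) (fun y => exp (- g * Rabs (t - y)) * F y) (fun y => exp (- g * (t - y)) * F y) a t).
  rewrite (RInt_ext (V:=R_CompleteNormedModule) (fun y => exp (- g * Rabs (t - y)) * F y) (fun y => exp (- g * (y - t)) * F y) t b).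
  unfold plus; simpl. field.
  - intros y Hy. rewrite Rmin_left, Rmax_right in Hy by lra. rewrite Rabs_left by lra. f_equal; f_equal; ring.
  - intros y Hy. rewrite Rmin_left, Rmax_right in Hy by lra. rewrite Rabs_right by lra. reflexivity.
Qed.

Lemma sum0 (f : nat -> R) : sum_n_m f 1 0 = 0.
Proof. rewrite sum_n_m_zero by lia. reflexivity. Qed.
Lemma sumS (f : nat -> R) m : sum_n_m f 1 (S m) = sum_n_m f 1 m + f (S m).
Proof. rewrite sum_n_Sm by lia. reflexivity. Qed.

Lemma Cn_cont a b n v D p : Cn_on a b n v D -> (p <= n)%nat -> cont_on a b (D p).
Proof.
  intros [H0 [H1 H2]] Hp. destruct (Nat.eq_dec p n) as [->|Hne]; auto.
  apply (deriv_cont a b (D p) (D (S p))). apply H1. lia.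
Qed.

Lemma partL a b g n v D x : a <= b -> 0 < g -> Cn_on a b n v D -> a <= x <= b ->
  forall m, (S m <= n)%nat ->
  / g * IntL a (D 1%nat) g x =
   - sum_n_m (fun p => (- (1 / g)) ^ p * (D p x - D p a * exp (- g * (x - a)))) 1 m
   - (- (1 / g)) ^ (S m) * IntL a (D (S m)) g x.
Proof.
  intros Hab Hg HC Hx. induction m; intros Hm.
  - rewrite sum0. simpl. field. lra.
  - rewrite sumS. rewrite IHm by lia.
    rewrite (IBP_L a b g (D (S m)) (D (S (S m))) x); auto.
    2: apply (proj1 (proj2 HC)); lia.
    2: apply (Cn_cont a b n v D); auto.
    replace ((-(1/g))^(S (S m))) with ((-(1/g))^(S m) * (-(1/g))) by (simpl; ring).
    field. lra.
Qed.

Lemma partR a b g n v D x : a <= b -> 0 < g -> Cn_on a b n v D -> a <= x <= b ->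
  forall m, (S m <= n)%nat ->
  - / g * IntR b (D 1%nat) g x =
   - sum_n_m (fun p => (1 / g) ^ p * (D p x - D p b * exp (- g * (b - x)))) 1 m
   - (1 / g) ^ (S m) * IntR b (D (S m)) g x.
Proof.
  intros Hab Hg HC Hx. induction m; intros Hm.
  - rewrite sum0. simpl. field. lra.
  - rewrite sumS. rewrite IHm by lia.
    rewrite (IBP_R a b g (D (S m)) (D (S (S m))) x); auto.
    2: apply (proj1 (proj2 HC)); lia.
    2: apply (Cn_cont a b n v D); auto.
    replace (((1/g))^(S (S m))) with (((1/g))^(S m) * ((1/g))) by (simpl; ring).
    field. lra.
Qed.

Lemma mu_bounds a b g : a < b -> 0 < g -> 0 < mu a b g < 1.
Proof.
  intros. unfold mu. split. apply exp_pos. rewrite <- exp_0. apply exp_increasing. nra.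
Qed.

Lemma mu_ne a b g : a < b -> 0 < g -> 1 - mu a b g ^ 2 <> 0.
Proof. intros. pose proof (mu_bounds a b g H H0). simpl. nra. Qed.

Definition Pt a b g x u ua ub := u + (mu a b g * ub - ua) / (1 - mu a b g ^ 2) * exp (- g * (x - a))
  + (mu a b g * ua - ub) / (1 - mu a b g ^ 2) * exp (- g * (b - x)).

Lemma Kid a b g n v D q t : a <= b -> 0 < g -> Cn_on a b n v D -> (S (S q) <= n)%nat -> a <= t <= b ->
  D q t - Int0 a b (D q) g t =
   (D q a - / g * D (S q) a) / 2 * exp (- g * (t - a)) + (D q b + / g * D (S q) b) / 2 * exp (- g * (b - t))
   - / g * / g * Int0 a b (D (S (S q))) g t.
Proof.
  intros Hab Hg HC Hq Ht.
  assert (Hd : forall p, (p < n)%nat -> deriv_on a b (D p) (D (S p))) by (apply HC).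
  rewrite (Int0_split a b g (D q)) by (auto; apply (Cn_cont a b n v D); auto; lia).
  rewrite (Int0_split a b g (D (S (S q)))) by (auto; apply (Cn_cont a b n v D); auto; lia).
  rewrite (IBP_L a b g (D q) (D (S q))) by (auto; try apply Hd; try apply (Cn_cont a b n v D); auto; lia).
  rewrite (IBP_L a b g (D (S q)) (D (S (S q)))) by (auto; try apply Hd; try apply (Cn_cont a b n v D); auto; lia).
  rewrite (IBP_R a b g (D q) (D (S q))) by (auto; try apply Hd; try apply (Cn_cont a b n v D); auto; lia).
  rewrite (IBP_R a b g (D (S q)) (D (S (S q)))) by (auto; try apply Hd; try apply (Cn_cont a b n v D); auto; lia).
  field. lra.
Qed.

Lemma PK a b g n v D q x : a < b -> 0 < g -> Cn_on a b n v D -> (S (S q) <= n)%nat -> a <= x <= b ->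
  Pt a b g x (D q x - Int0 a b (D q) g x) (D q a - Int0 a b (D q) g a) (D q b - Int0 a b (D q) g b)
  = - (/ g * / g) * Pt a b g x (Int0 a b (D (S (S q))) g x) (Int0 a b (D (S (S q))) g a) (Int0 a b (D (S (S q))) g b).
Proof.
  intros Hab Hg HC Hq Hx.
  rewrite !(Kid a b g n v D q) by (auto; lra).
  replace (a - a) with 0 by ring. replace (b - b) with 0 by ring. rewrite Rmult_0_r, exp_0.
  unfold Pt. pose proof (mu_ne a b g Hab Hg). unfold mu in *. field. split; lra.
Qed.

Lemma Pt_sub a b g x u ua ub w wa wb :
  Pt a b g x (u - w) (ua - wa) (ub - wb) = Pt a b g x u ua ub - Pt a b g x w wa wb.
Proof. unfold Pt. unfold Rdiv. ring. Qed.

Lemma part0 a b g n v D x : a < b -> 0 < g -> Cn_on a b n v D -> a <= x <= b ->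
  forall m, (2 * m + 2 <= n)%nat ->
  Pt a b g x (D 0%nat x - Int0 a b (D 0%nat) g x) (D 0%nat a - Int0 a b (D 0%nat) g a) (D 0%nat b - Int0 a b (D 0%nat) g b)
  = - sum_n_m (fun p => (1 / g) ^ (2 * p) * Pt a b g x (D (2 * p)%nat x) (D (2 * p)%nat a) (D (2 * p)%nat b)) 1 m
    - (1 / g) ^ (2 * m + 2) * Pt a b g x (Int0 a b (D (2 * m + 2)%nat) g x) (Int0 a b (D (2 * m + 2)%nat) g a) (Int0 a b (D (2 * m + 2)%nat) g b).
Proof.
  intros Hab Hg HC Hx. induction m; intros Hm.
  - rewrite sum0. rewrite (PK a b g n v D 0 x) by (auto; lia). simpl. field. lra.
  - rewrite sumS. rewrite IHm by lia.
    assert (HP := PK a b g n v D (2 * m + 2)%nat x Hab Hg HC ltac:(lia) Hx).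
    rewrite Pt_sub in HP.
    replace (S (S (2 * m + 2))) with (2 * S m + 2)%nat in HP by lia.
    replace (2 * S m)%nat with (2 * m + 2)%nat by lia.
    replace (2 * m + 2 + 2)%nat with (2 * S m + 2)%nat by lia.
    set (PI := Pt a b g x (Int0 a b (D (2 * m + 2)%nat) g x) (Int0 a b (D (2 * m + 2)%nat) g a) (Int0 a b (D (2 * m + 2)%nat) g b)) in *.
    set (PD := Pt a b g x (D (2 * m + 2)%nat x) (D (2 * m + 2)%nat a) (D (2 * m + 2)%nat b)) in *.
    set (PJ := Pt a b g x (Int0 a b (D (2 * S m + 2)%nat) g x) (Int0 a b (D (2 * S m + 2)%nat) g a) (Int0 a b (D (2 * S m + 2)%nat) g b)) in *.
    replace (2 * S m + 2)%nat with ((2 * m + 2) + 2)%nat by lia. rewrite (pow_add (1/g) (2*m+2) 2).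
    assert (PI = PD + / g * / g * PJ) by lra. rewrite H. field. lra.
Qed.

Theorem lemma1 (a b g : R) (k : nat) (Ca Cb : R) :
  a < b -> 0 < g -> (1 <= k)%nat ->
  (forall (v : R -> R) (D : nat -> R -> R), Cn_on a b (k + 1) v D ->
    forall x, a <= x <= b ->
      DiffL a Ca v g x =
        - sum_n_m (fun p => (- (1 / g)) ^ p * (D p x - D p a * exp (- g * (x - a)))) 1 k
        - (- (1 / g)) ^ (k + 1) * IntL a (D (k + 1)%nat) g x
        + Ca * exp (- g * (x - a))
      /\
      DiffR b Cb v g x =
        - sum_n_m (fun p => (1 / g) ^ p * (D p x - D p b * exp (- g * (b - x)))) 1 k
        - (1 / g) ^ (k + 1) * IntR b (D (k + 1)%nat) g x
        + Cb * exp (- g * (b - x))) /\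
  (forall (v : R -> R) (D : nat -> R -> R), Cn_on a b (2 * k + 2) v D ->
    forall x, a <= x <= b ->
      Diff0 a b Ca Cb v g x =
        - sum_n_m (fun p => (1 / g) ^ (2 * p) *
             (D (2 * p)%nat x
              + (mu a b g * D (2 * p)%nat b - D (2 * p)%nat a) / (1 - mu a b g ^ 2)
                  * exp (- g * (x - a))
              + (mu a b g * D (2 * p)%nat a - D (2 * p)%nat b) / (1 - mu a b g ^ 2)
                  * exp (- g * (b - x)))) 1 k
        - (mu a b g * Cb - Ca) / (1 - mu a b g ^ 2) * exp (- g * (x - a))
        - (mu a b g * Ca - Cb) / (1 - mu a b g ^ 2) * exp (- g * (b - x))
        - (1 / g) ^ (2 * k + 2) *
            (Int0 a b (D (2 * k + 2)%nat) g x
             + (mu a b g * Int0 a b (D (2 * k + 2)%nat) g b - Int0 a b (D (2 * k + 2)%nat) g a)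
                 / (1 - mu a b g ^ 2) * exp (- g * (x - a))
             + (mu a b g * Int0 a b (D (2 * k + 2)%nat) g a - Int0 a b (D (2 * k + 2)%nat) g b)
                 / (1 - mu a b g ^ 2) * exp (- g * (b - x)))).
Proof.
  intros Hab Hg Hk. split.
  - intros v D HC x Hx.
    assert (Hd : forall p, (p < k + 1)%nat -> deriv_on a b (D p) (D (S p))) by (apply HC).
    assert (H0 := proj1 HC).
    split.
    + unfold DiffL.
      assert (HIv : IntL a v g x = IntL a (D 0%nat) g x).
      { unfold IntL. f_equal. apply RInt_ext. intros y Hy.
        rewrite Rmin_left, Rmax_right in Hy by lra. rewrite (H0 y) by lra. reflexivity. }
      rewrite HIv, <- (H0 x Hx), <- (H0 a) by lra.
      rewrite (IBP_L a b g (D 0%nat) (D 1%nat)) by (auto; try lra; try apply Hd; try apply (Cn_cont a b (k+1) v D); auto; lia).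
      pose proof (partL a b g (k+1) v D x ltac:(lra) Hg HC Hx k ltac:(lia)) as P.
      replace (k + 1)%nat with (S k) by lia. lra.
    + unfold DiffR.
      assert (HIv : IntR b v g x = IntR b (D 0%nat) g x).
      { unfold IntR. f_equal. apply RInt_ext. intros y Hy.
        rewrite Rmin_left, Rmax_right in Hy by lra. rewrite (H0 y) by lra. reflexivity. }
      rewrite HIv, <- (H0 x Hx), <- (H0 b) by lra.
      rewrite (IBP_R a b g (D 0%nat) (D 1%nat)) by (auto; try lra; try apply Hd; try apply (Cn_cont a b (k+1) v D); auto; lia).
      pose proof (partR a b g (k+1) v D x ltac:(lra) Hg HC Hx k ltac:(lia)) as P.
      replace (k + 1)%nat with (S k) by lia. lra.
  - intros v D HC x Hx.
    assert (H0 := proj1 HC).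
    assert (HI0 : forall t, Int0 a b v g t = Int0 a b (D 0%nat) g t).
    { intros t. unfold Int0. f_equal. apply RInt_ext. intros y Hy.
      rewrite Rmin_left, Rmax_right in Hy by lra. rewrite (H0 y) by lra. reflexivity. }
    unfold Diff0, Coef_A0, Coef_B0. rewrite !HI0.
    rewrite <- (H0 x Hx), <- (H0 a), <- (H0 b) by lra.
    pose proof (part0 a b g (2 * k + 2) v D x Hab Hg HC Hx k (le_n _)) as P.
    unfold Pt in P. pose proof (mu_ne a b g Hab Hg).
    set (S := sum_n_m _ 1 k) in *.
    rewrite <- Rminus_0_r at 1. rewrite <- (Rminus_diag_eq _ _ P).
    field. auto.
Qed.
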